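(* Let $n\ge3$ and $B_n=\langle a,b\mid ba=b^n\rangle$. 1. $\mathcal L(B_n)$ is closed under set addition, i.e. $L_1+L_2\in\mathcal L(B_n)$ for all $L_1,L_2\in\mathcal L(B_n)$; hence $\mathcal L(B_n)$ is a monoid under set addition with identity $\{0\}$. 2. The map $\Phi:\mathcal L(B_n)\to H$, $x+(n-2)\cdot[0,q]\mapsto(x,q)$, is a monoid isomorphism onto $H=\{(k,i)\mid k,i\in\mathbb N_0,\ k=i=0\text{ or }k>i\}\subset(\mathbb N_0^2,+)$. Moreover, $H$ is a reduced atomic commutative cancellative half-factorial monoid with $\mathcal A(H)=\{(k,k-1)\mid k\in\mathbb N\}$.
   Context: $B_n$ is the monoid with generators $a,b$ and single relation $ba=b^n$; its atoms are $a,b$. $\mathsf L(y)$ is the set of $k$ such that $y$ is a product of $k$ atoms ($\mathsf L(1)=\{0\}$), $\mathcal L(B_n)=\{\mathsf L(y)\mid y\in B_n\}$; every element of $\mathcal L(B_n)$ has the form $x+(n-2)\cdot[0,q]=\{x,x+(n-2),\dots,x+q(n-2)\}$ with $x,q\in\mathbb N_0$ and ($x=q=0$ or $x>q$), uniquely determined by $(x,q)$. For sets $L_1,L_2\subset\mathbb Z$, $L_1+L_2=\{l_1+l_2\mid l_i\in L_i\}$. A monoid is half-factorial if every non-unit's factorizations into atoms all have the same length; $\mathcal A(H)$ denotes the set of atoms. *)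

(* Defs.v *)
From mathcomp Require Import all_boot.
Set Implicit Arguments. Unset Strict Implicit. Unset Printing Implicit Defensive.

Inductive letter := La | Lb.

(* Words over the atoms a, b; the congruence generated by  b a = b^n :
   the equivalence closure of rewriting  x (b a) y  ->  x (b^n) y. *)
Inductive bconv (n : nat) : seq letter -> seq letter -> Prop :=
| bconv_refl w : bconv n w w
| bconv_sym u v : bconv n u v -> bconv n v u
| bconv_trans u v w : bconv n u v -> bconv n v w -> bconv n u w
| bconv_step x y : bconv n (x ++ [:: Lb; La] ++ y) (x ++ nseq n Lb ++ y).

Definition natset := nat -> Prop.
Definition seteq (L1 L2 : natset) : Prop := forall k, L1 k <-> L2 k.
Definition sumset (L1 L2 : natset) : natset :=
  fun k => exists k1 k2, [/\ L1 k1, L2 k2 & k = k1 + k2].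

(* L(y) for the element y of B_n represented by the word w: the set of k such
   that y is a product of k atoms, i.e. y is represented by a word of length k. *)
Definition Lset (n : nat) (w : seq letter) : natset :=
  fun k => exists w', bconv n w w' /\ size w' = k.

Definition inLB (n : nat) (L : natset) : Prop := exists w, seteq L (Lset n w).

Definition AP (d x q : nat) : natset := fun k => exists2 i, i <= q & k = x + i * d.

Definition inH (p : nat * nat) : Prop := (p.1 = 0 /\ p.2 = 0) \/ p.2 < p.1.
Definition addp (p r : nat * nat) : nat * nat := (p.1 + r.1, p.2 + r.2).
Definition zerop : nat * nat := (0, 0).

Definition unitH (p : nat * nat) : Prop := inH p /\ exists2 r, inH r & addp p r = zerop.
Definition atomH (p : nat * nat) : Prop :=
  [/\ inH p, ~ unitH p &
      forall u v, inH u -> inH v -> addp u v = p -> unitH u \/ unitH v].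
Definition sump (s : seq (nat * nat)) : nat * nat := foldr addp zerop s.
Definition factorization (s : seq (nat * nat)) (p : nat * nat) : Prop :=
  (forall a, a \in s -> atomH a) /\ sump s = p.

Definition Phi (n : nat) (L : natset) (p : nat * nat) : Prop :=
  inH p /\ seteq L (AP (n - 2) p.1 p.2).

(* Main.v *)
Require Import Defs.
From mathcomp Require Import all_boot zify.

Fixpoint nf (m : nat) (w : seq letter) : nat * nat :=
  match w with
  | [::] => (0, 0)
  | La :: w' => ((nf m w').1.+1, (nf m w').2)
  | Lb :: w' => (0, 1 + (nf m w').1 * m.+1 + (nf m w').2)
  end.

Definition mulp m (p r : nat * nat) :=
  if p.2 == 0 then (p.1 + r.1, r.2) else (p.1, p.2 + r.1 * m.+1 + r.2).

Lemma nf_cat m x y : nf m (x ++ y) = mulp m (nf m x) (nf m y).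
Proof.
elim: x => [|[] x IH] /=.
- by rewrite /mulp /=; case: (nf m y).
- rewrite IH /mulp; case: (nf m x) => i j /=; case: eqP => _ /=; congr (_,_); lia.
- rewrite IH /mulp; case: (nf m x) => i j /=; case: eqP => [->|_] /=;
  congr (_, _); rewrite ?mulnDl; lia.
Qed.

Lemma nf_nseqb m k y :
  nf m (nseq k.+1 Lb ++ y) = (0, k.+1 + (nf m y).1 * m.+1 + (nf m y).2).
Proof.
elim: k => [|k IH] //.
change (nf m (Lb :: (nseq k.+1 Lb ++ y)) = (0, k.+2 + (nf m y).1 * m.+1 + (nf m y).2)).
have E : forall w, nf m (Lb :: w) = (0, 1 + (nf m w).1 * m.+1 + (nf m w).2) by [].
rewrite E IH /=; congr (_,_); lia.
Qed.

Lemma bconv_nf m u v : bconv m.+2 u v -> nf m u = nf m v.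
Proof.
elim=> [w|u' v' _ IH|u' v' w' _ IH1 _ IH2|x y] //.
- by rewrite IH1 IH2.
- have H : nf m ([:: Lb; La] ++ y) = nf m (nseq m.+2 Lb ++ y).
    rewrite nf_nseqb /=; congr (_,_); rewrite mulSn; lia.
  by rewrite nf_cat [RHS]nf_cat H.
Qed.

Lemma bconv_cons n c u v : bconv n u v -> bconv n (c :: u) (c :: v).
Proof.
elim=> [w|u' v' _ IH|u' v' w' _ IH1 _ IH2|x y].
- exact: bconv_refl.
- exact: bconv_sym.
- exact: bconv_trans IH1 IH2.
- exact: (bconv_step n (c :: x) y).
Qed.

Lemma bconv_catl n x u v : bconv n u v -> bconv n (x ++ u) (x ++ v).
Proof. by elim: x => //= c x IH h; apply: bconv_cons; exact: IH. Qed.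

Lemma nseqS_cat (T : Type) k (x : T) s : nseq k.+1 x ++ s = nseq k x ++ x :: s.
Proof. by elim: k => //= k <-. Qed.

Lemma bconv_bas m i z :
  bconv m.+2 (Lb :: nseq i La ++ z) (nseq (1 + i * m.+1) Lb ++ z).
Proof.
elim: i => [|i IH]; first by rewrite mul0n addn0; apply: bconv_refl.
have st := bconv_step m.+2 [::] (nseq i La ++ z).
rewrite !cat0s nseqS_cat in st.
apply: bconv_trans st _.
apply: bconv_trans (bconv_catl _ (nseq m.+1 Lb) _ _ IH) _.
rewrite catA -nseqD.
have -> : m.+1 + (1 + i * m.+1) = 1 + i.+1 * m.+1 by rewrite mulSn; lia.
exact: bconv_refl.
Qed.

Lemma nf_word m w : bconv m.+2 w (nseq (nf m w).1 La ++ nseq (nf m w).2 Lb).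
Proof.
elim: w => [|[] w IH] /=.
- exact: bconv_refl.
- exact: bconv_cons.
- apply: bconv_trans (bconv_cons _ Lb _ _ IH) _.
  apply: bconv_trans (bconv_bas _ _ _) _.
  rewrite -nseqD; exact: bconv_refl.
Qed.

Lemma bconv_iff m u v : bconv m.+2 u v <-> nf m u = nf m v.
Proof.
split; first exact: bconv_nf.
move=> e; apply: bconv_trans (nf_word m u) _; rewrite e.
apply: bconv_sym; exact: nf_word.
Qed.

Lemma Lset_nf m w k : Lset m.+2 w k <-> exists w', nf m w' = nf m w /\ size w' = k.
Proof.
split; case=> w' [h1 h2]; exists w'; split => //.
- by apply/esym/bconv_iff.
- by apply/bconv_iff.
Qed.

Fixpoint cnt m w := match w with
  | [::] => 0 | La :: w' => cnt m w' | Lb :: w' => (nf m w').1 + cnt m w' end.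

Lemma cnt_spec m w : size w + m * cnt m w = (nf m w).1 + (nf m w).2 /\
  (cnt m w * m.+1 < (nf m w).2 \/ ((nf m w).2 = 0 /\ cnt m w = 0)).
Proof.
elim: w => [|[] w [IH1 IH2]] /=.
- by split; lia.
- split => //; lia.
- split; first by rewrite !mulnS !mulnDr; lia.
  left; rewrite mulnDl; case: IH2 => [h|[-> ->]]; lia.
Qed.

Lemma nf_ab m i j : nf m (nseq i La ++ nseq j Lb) = (i, j).
Proof.
elim: i => [|i IH] /=; last by rewrite IH.
case: j => // j; rewrite -[nseq j.+1 Lb]cats0 nf_nseqb /=; congr (_,_); lia.
Qed.
Definition xq m (p : nat * nat) : nat * nat :=
  if p.2 == 0 then (p.1, 0)
  else (p.1 + p.2 - (p.2 - 1) %/ m.+1 * m, (p.2 - 1) %/ m.+1).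

Lemma nf_Lb m w : nf m (Lb :: w) = (0, 1 + (nf m w).1 * m.+1 + (nf m w).2).
Proof. by []. Qed.

Lemma S_char m i j : inH (xq m (i,j)) /\
  seteq (fun k => exists w, nf m w = (i,j) /\ size w = k)
        (AP m (xq m (i,j)).1 (xq m (i,j)).2).
Proof.
have nfa : nf m (nseq i La) = (i, 0) by have := nf_ab m i 0; rewrite cats0.
rewrite /xq /=; case: eqP => [->|j0].
- split; first by rewrite /inH /=; lia.
  move=> k /=; split.
  + case=> w [e <-]; have [h1 h2] := cnt_spec m w; rewrite e /= in h1 h2.
    exists 0 => //; case: h2 => [h|[_ c0]]; [lia|]; rewrite c0 in h1; lia.
  + case=> r; rewrite leqn0 => /eqP -> ->.
    exists (nseq i La ++ nseq 0 Lb); rewrite nf_ab size_cat !size_nseq; split => //; lia.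
- have hq : (j - 1) %/ m.+1 * m.+1 <= j - 1 by apply: leq_divM.
  move: hq; set q := (j - 1) %/ m.+1 => hq.
  split; first by rewrite /inH /=; right; rewrite mulnS in hq; lia.
  move=> k /=; split.
  + case=> w [e <-]; have [h1 h2] := cnt_spec m w; rewrite e /= in h1 h2.
    case: h2 => [h|[]]; last lia.
    have cq : cnt m w <= q by rewrite /q leq_divRL //; lia.
    exists (q - cnt m w); first lia.
    have : cnt m w * m <= q * m by rewrite leq_mul2r cq orbT.
    rewrite mulnBl; rewrite mulnS in hq; lia.
  + case=> r hr ->.
    have hc : (q - r) * m.+1 <= j - 1.
      by apply: leq_trans hq; rewrite leq_mul2r leq_subr orbT.
    exists (nseq i La ++ Lb :: nseq (q - r) La ++ nseq (j - 1 - (q - r) * m.+1) Lb).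
    split.
    * rewrite nf_cat nfa nf_Lb nf_ab /mulp /=; congr (_,_); lia.
    * rewrite size_cat /= size_cat !size_nseq.
      have : r * m <= q * m by rewrite leq_mul2r hr orbT.
      rewrite mulnS mulnBl in hc *; rewrite mulnS in hq.
      lia.
Qed.
Set Implicit Arguments. Unset Strict Implicit.

Lemma seteq_sym L1 L2 : seteq L1 L2 -> seteq L2 L1.
Proof. by move=> h k; split => /h. Qed.

Lemma seteq_trans L1 L2 L3 : seteq L1 L2 -> seteq L2 L3 -> seteq L1 L3.
Proof. by move=> h1 h2 k; split => [/h1/h2|/h2/h1]. Qed.

Lemma Lset_AP m w : inH (xq m (nf m w)) /\
  seteq (Lset m.+2 w) (AP m (xq m (nf m w)).1 (xq m (nf m w)).2).
Proof.
case E: (nf m w) => [i j].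
have [h1 h2] := S_char m i j; split => //.
apply: seteq_trans h2 => k; rewrite Lset_nf E; split => //.
Qed.

Lemma real m p : inH p -> exists w, xq m (nf m w) = p.
Proof.
case: p => x q; rewrite /inH /= => [[[-> ->]|h]]; first by exists [::].
exists (nseq (x - q - 1) La ++ nseq (q * m.+1 + 1) Lb).
rewrite nf_ab /xq /= addn1 /= subSS subn0 mulnK //; congr (_, _).
rewrite mulnS; lia.
Qed.

Lemma LB_char m L : inLB m.+2 L <-> exists p, inH p /\ seteq L (AP m p.1 p.2).
Proof.
split.
- case=> w h; have [h1 h2] := Lset_AP m w.
  by exists (xq m (nf m w)); split => //; apply: seteq_trans h h2.
- case=> p [hp h]; have [w e] := real m hp.
  exists w; have [_ h2] := Lset_AP m w; rewrite e in h2.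
  exact: seteq_trans h (seteq_sym h2).
Qed.

Lemma AP_inj d x q x' q' : 0 < d -> seteq (AP d x q) (AP d x' q') -> x = x' /\ q = q'.
Proof.
move=> hd h.
have [i1 _ e1] : AP d x' q' x by apply h; exists 0 => //; rewrite mul0n addn0.
have [i2 _ e2] : AP d x q x' by apply h; exists 0 => //; rewrite mul0n addn0.
have ex : x = x' by nia.
rewrite -ex in h; split => //.
have [i3 h3 e3] : AP d x q' (x + q * d) by apply h; exists q.
have [i4 h4 e4] : AP d x q (x + q' * d) by apply h; exists q'.
have : q * d <= i3 * d by lia.
have : q' * d <= i4 * d by lia.
rewrite !leq_pmul2r //; lia.
Qed.

Lemma AP_sum d x1 q1 x2 q2 :
  seteq (sumset (AP d x1 q1) (AP d x2 q2)) (AP d (x1 + x2) (q1 + q2)).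
Proof.
move=> k; split.
- case=> k1 [k2 [[i1 h1 ->] [i2 h2 ->] ->]].
  by exists (i1 + i2); [lia | rewrite mulnDl; lia].
- case=> i hi ->.
  have [i1 [i2 [-> [h1 h2]]]] : exists i1 i2, i = i1 + i2 /\ i1 <= q1 /\ i2 <= q2.
    by exists (minn i q1), (i - minn i q1); lia.
  exists (x1 + i1 * d), (x2 + i2 * d); split; [by exists i1|by exists i2|].
  rewrite mulnDl; lia.
Qed.

Lemma sumset_eq L1 L2 M1 M2 :
  seteq L1 M1 -> seteq L2 M2 -> seteq (sumset L1 L2) (sumset M1 M2).
Proof.
move=> h1 h2 k; split; case=> k1 [k2 [a b c]]; exists k1, k2; split => //.
- exact/h1. - exact/h2. - exact/h1. - exact/h2.
Qed.

Lemma AP0 d x : seteq (fun k => k = x) (AP d x 0).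
Proof.
move=> k; split; first by move=> ->; exists 0 => //; rewrite mul0n addn0.
by case=> i; rewrite leqn0 => /eqP -> ->; rewrite mul0n addn0.
Qed.

Lemma unit_iff p : unitH p <-> p = zerop.
Proof.
split.
- case: p => a b [_ [[c e] _]]; rewrite /addp /zerop /= => [[h1 h2]].
  congr (_,_); lia.
- move=> ->; split; first by left.
  by exists zerop => //; left.
Qed.

Lemma atom_iff p : atomH p <-> exists2 k, 1 <= k & p = (k, k - 1).
Proof.
split.
- case: p => a b [hp hnu hdec].
  have hb : b < a.
    case: hp => //= [[ea eb]]; case: hnu; apply/unit_iff; by rewrite ea eb.
  case: (eqVneq a b.+1) => [->|ne]; first by exists b.+1 => //; rewrite subn1.
  have := hdec (b.+1, b) (a - b.+1, 0).
  case.
  + by right => /=.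
  + by right => /=; lia.
  + by rewrite /addp /=; congr (_,_); lia.
  + by move/unit_iff.
  + by move/unit_iff => [] /=; lia.
- case=> k hk ->; split.
  + by right => /=; lia.
  + by move/unit_iff => [] /=; lia.
  + case=> [u1 u2] [v1 v2]; rewrite /inH /addp /= => hu hv [e1 e2].
    case: hu => [[-> ->]|hu]; first by left; apply/unit_iff.
    case: hv => [[-> ->]|hv]; first by right; apply/unit_iff.
    lia.
Qed.

Lemma sump_nseq k : sump (nseq k (1, 0)) = (k, 0).
Proof. by elim: k => //= k ->. Qed.

Lemma fact_size s p : factorization s p -> p.1 = p.2 + size s.
Proof.
elim: s p => [|a s IH] p [ha e]; first by rewrite -e.
have e' : (sump s).1 = (sump s).2 + size s.
  by apply: IH; split => // b hb; apply: ha; rewrite inE hb orbT.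
  have [k hk ea] : exists2 k, 1 <= k & a = (k, k - 1).
    by apply/atom_iff; apply: ha; rewrite inE eqxx.
  rewrite -e /= ea /addp /=; lia.
Qed.

Lemma inH_add p r : inH p -> inH r -> inH (addp p r).
Proof. by case: p r => [a b] [c d]; rewrite /inH /addp /=; lia. Qed.

Lemma Phi_iff m L p : Phi m.+2 L p <-> inH p /\ seteq L (AP m p.1 p.2).
Proof. by rewrite /Phi; have -> : m.+2 - 2 = m by lia. Qed.

Theorem theorem4p5 (n : nat) (hn : 3 <= n) :
  (* 1. closure under set addition; {0} = L(1) is the identity *)
  ((forall L1 L2, inLB n L1 -> inLB n L2 -> inLB n (sumset L1 L2)) /\
   inLB n (fun k => k = 0) /\
   (forall L, inLB n L -> seteq (sumset (fun k => k = 0) L) L)) /\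
  (* 2. Phi is a well-defined monoid isomorphism L(B_n) -> H *)
  ((forall L, inLB n L -> exists! p, Phi n L p) /\
   (forall L1 L2 p, inLB n L1 -> inLB n L2 -> Phi n L1 p -> Phi n L2 p -> seteq L1 L2) /\
   (forall p, inH p -> exists2 L, inLB n L & Phi n L p) /\
   (forall L1 L2 p1 p2, inLB n L1 -> inLB n L2 -> Phi n L1 p1 -> Phi n L2 p2 ->
      Phi n (sumset L1 L2) (addp p1 p2)) /\
   Phi n (fun k => k = 0) zerop) /\
  (* H is a reduced atomic commutative cancellative half-factorial submonoid
     with atoms {(k, k-1) | k >= 1} *)
  (inH zerop /\ (forall p r, inH p -> inH r -> inH (addp p r)) /\
   (forall p r, addp p r = addp r p) /\
   (forall p, unitH p <-> p = zerop) /\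
   (forall p r s, inH p -> inH r -> inH s -> addp p r = addp p s -> r = s) /\
   (forall p, inH p -> ~ unitH p -> exists s, factorization s p) /\
   (forall p s t, inH p -> ~ unitH p -> factorization s p -> factorization t p ->
      size s = size t) /\
   (forall p, atomH p <-> exists2 k, 1 <= k & p = (k, k - 1))).
Proof.
have [m En hm] : exists2 m, n = m.+2 & 0 < m by exists (n - 2); lia.
subst n.
split.
{ split; [|split].
- move=> L1 L2 /LB_char [p1 [h1 e1]] /LB_char [p2 [h2 e2]].
  apply/LB_char; exists (addp p1 p2); split; first exact: inH_add.
  exact: seteq_trans (sumset_eq e1 e2) (AP_sum _ _ _ _ _).
- apply/LB_char; exists zerop; split; [by left | exact: AP0].
- move=> L _ k; split.
  + by case=> k1 [k2 [-> h ->]].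
  + by move=> h; exists 0, k. }
split.
{ split; [|split; [|split; [|split]]].
- move=> L /LB_char [p [hp e]]; exists p; split; first by apply/Phi_iff.
  move=> p' /Phi_iff [hp' e'].
  have [E1 E2] := AP_inj hm (seteq_trans (seteq_sym e) e').
  by rewrite (surjective_pairing p) (surjective_pairing p') E1 E2.
- move=> L1 L2 p _ _ /Phi_iff [_ e1] /Phi_iff [_ e2].
  exact: seteq_trans e1 (seteq_sym e2).
- move=> p hp; have [w e] := real m hp.
  exists (Lset m.+2 w); first by exists w => k.
  apply/Phi_iff; have [_ h] := Lset_AP m w; rewrite e in h; by split.
- move=> L1 L2 p1 p2 _ _ /Phi_iff [h1 e1] /Phi_iff [h2 e2]; apply/Phi_iff.
  split; first exact: inH_add.
  exact: seteq_trans (sumset_eq e1 e2) (AP_sum _ _ _ _ _).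
- apply/Phi_iff; split; [by left | exact: AP0]. }
split; first by left.
split; first exact: inH_add.
split; first by move=> [a b] [c d]; rewrite /addp /= addnC [b + d]addnC.
split; first exact: unit_iff.
split.
  by move=> [a b] [c d] [e f] _ _ _; rewrite /addp => [[h1 h2]]; congr (_,_); lia.
split.
- move=> [a b] hp hnu.
  have hb : b < a.
    case: hp => //= [[e1 e2]]; case: hnu; apply/unit_iff; by rewrite e1 e2.
  exists ((b.+1, b) :: nseq (a - b - 1) (1,0)); split.
  + move=> x; rewrite inE => /orP [/eqP -> | /nseqP [-> _]]; apply/atom_iff.
    * by exists b.+1 => //; rewrite subn1.
    * by exists 1.
  + rewrite /= sump_nseq /addp /=; congr (_,_); lia.
split.
- move=> p s t _ _ /fact_size e1 /fact_size e2; lia.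
- exact: atom_iff.
Qed.
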